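(* Let $(M,g)$ be a $2$-dimensional Riemannian manifold with Levi-Civita connection $\nabla$, and let $h=h_{ij}dx^i\otimes dx^j$ be a smooth symmetric Codazzi tensor, i.e. $h_{ij}=h_{ji}$ and $\nabla_ih_{jk}=\nabla_jh_{ik}$ for all $i,j,k$. Let $H=g^{ij}h_{ij}$ and $\mathring{h}_{ij}:=h_{ij}-\frac{H}{2}g_{ij}$. Then \[ 2|\mathring{h}|^2\bigl(|\nabla h|^2-|\nabla H|^2\bigr)=\bigl|\nabla|\mathring{h}|^2\bigr|^2-2\,\mathring{h}_{ij}\,\nabla^i|\mathring{h}|^2\,\nabla^jH . \]
   Context: All norms and contractions are taken with respect to $g$, e.g. $|\mathring h|^2=g^{ik}g^{jl}\mathring h_{ij}\mathring h_{kl}$, $|\nabla h|^2=g^{ia}g^{jb}g^{kc}\nabla_ih_{jk}\nabla_ah_{bc}$, and $\nabla^i=g^{ij}\nabla_j$. *)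

(* Defs.v *)
(* Local coordinate formulation of a 2-dimensional
   Riemannian manifold: an open chart U of R^2 (row vectors 'rV[R]_2) with a
   smooth metric g_ij and smooth symmetric tensor h_ij. *)
From HB Require Import structures.
From mathcomp Require Import all_boot all_order all_algebra.
From mathcomp Require Import all_classical all_reals all_analysis.
Set Implicit Arguments. Unset Strict Implicit. Unset Printing Implicit Defensive.
Import Order.TTheory GRing.Theory Num.Theory.
Import numFieldNormedType.Exports.
Local Open Scope classical_set_scope.
Local Open Scope ring_scope.

Section Defs.
Variable R : realType.
Notation P := 'rV[R]_2.
Notation fn := (P -> R).

Definition ecoord (i : 'I_2) : P := delta_mx 0 i.

Definition pd (i : 'I_2) (f : fn) : fn := fun x => 'D_(ecoord i) f x.

Definition pds (s : seq 'I_2) (f : fn) : fn := foldr pd f s.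

Definition smooth_on (U : set P) (f : fn) : Prop :=
  forall (s : seq 'I_2) (x : P), U x -> differentiable (pds s f) x.

Definition tensor2 := 'I_2 -> 'I_2 -> fn.

Definition matx (g : tensor2) (x : P) : 'M[R]_2 := \matrix_(i, j) g i j x.

Definition riemannian_metric_on (U : set P) (g : tensor2) : Prop :=
  (forall i j, smooth_on U (g i j)) /\
  (forall i j x, U x -> g i j x = g j i x) /\
  (forall x (v : 'rV[R]_2), U x -> v != 0 -> 0 < (v *m matx g x *m v^T) 0 0).

Definition ginv (g : tensor2) : tensor2 := fun i j x => invmx (matx g x) i j.

Definition christoffel (g : tensor2) (k i j : 'I_2) : fn := fun x =>
  2^-1 * \sum_(l < 2) ginv g k l x *
     (pd i (g j l) x + pd j (g i l) x - pd l (g i j) x).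

Definition nabla2 (g h : tensor2) (i j k : 'I_2) : fn := fun x =>
  pd i (h j k) x
  - \sum_(l < 2) christoffel g l i j x * h l k x
  - \sum_(l < 2) christoffel g l i k x * h j l x.

Definition meanH (g h : tensor2) : fn := fun x =>
  \sum_(i < 2) \sum_(j < 2) ginv g i j x * h i j x.

Definition traceless (g h : tensor2) : tensor2 := fun i j x =>
  h i j x - meanH g h x / 2 * g i j x.

Definition norm2sq (g T : tensor2) : fn := fun x =>
  \sum_(i < 2) \sum_(j < 2) \sum_(k < 2) \sum_(l < 2)
    ginv g i k x * ginv g j l x * T i j x * T k l x.

Definition norm3sq (g : tensor2) (T : 'I_2 -> 'I_2 -> 'I_2 -> fn) : fn := fun x =>
  \sum_(i < 2) \sum_(j < 2) \sum_(k < 2) \sum_(a < 2) \sum_(b < 2) \sum_(c < 2)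
    ginv g i a x * ginv g j b x * ginv g k c x * T i j k x * T a b c x.

Definition gradinner (g : tensor2) (f1 f2 : fn) : fn := fun x =>
  \sum_(i < 2) \sum_(j < 2) ginv g i j x * pd i f1 x * pd j f2 x.

Definition contract_grad (g T : tensor2) (f1 f2 : fn) : fn := fun x =>
  \sum_(i < 2) \sum_(j < 2) \sum_(a < 2) \sum_(b < 2)
    T i j x * ginv g i a x * pd a f1 x * ginv g j b x * pd b f2 x.

End Defs.

(* Main.v *)
Require Import Defs.
From HB Require Import structures.
From mathcomp Require Import all_boot all_order all_algebra.
From mathcomp Require Import all_classical all_reals all_analysis.
From mathcomp Require Import ring lra.
Set Implicit Arguments. Unset Strict Implicit. Unset Printing Implicit Defensive.
Import Order.TTheory GRing.Theory Num.Theory.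
Import numFieldNormedType.Exports.
Local Open Scope classical_set_scope.
Local Open Scope ring_scope.
Section Calc.
Variable R : realType.
Notation P := 'rV[R]_2.
Variables (x v : P).

Lemma Dmul (f g : P -> R) df dg : is_derive x v f df -> is_derive x v g dg ->
  is_derive x v (fun y => f y * g y) (f x * dg + g x * df).
Proof. move=> Hf Hg; exact: (is_deriveM Hf Hg). Qed.

Lemma Dadd (f g : P -> R) df dg : is_derive x v f df -> is_derive x v g dg ->
  is_derive x v (fun y => f y + g y) (df + dg).
Proof. move=> Hf Hg; exact: (is_deriveD Hf Hg). Qed.

Lemma Dsub (f g : P -> R) df dg : is_derive x v f df -> is_derive x v g dg ->
  is_derive x v (fun y => f y - g y) (df - dg).
Proof. move=> Hf Hg; exact: (is_deriveB Hf Hg). Qed.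

Lemma Dopp (f : P -> R) df : is_derive x v f df ->
  is_derive x v (fun y => - f y) (- df).
Proof. move=> Hf; exact: (is_deriveN Hf). Qed.

Lemma Dcst (c : R) : is_derive x v (fun _ : P => c) 0.
Proof. exact: is_derive_cst. Qed.

Lemma Dinv (f : P -> R) df : f x != 0 -> is_derive x v f df ->
  is_derive x v (fun y => (f y)^-1) (- (f x) ^- 2 * df).
Proof.
move=> f0 [Hd Hv]; split; first exact: derivableV.
by rewrite deriveV // Hv.
Qed.

Lemma Dsum n (F : 'I_n -> P -> R) dF : (forall i, is_derive x v (F i) (dF i)) ->
  is_derive x v (fun y => \sum_(i < n) F i y) (\sum_(i < n) dF i).
Proof.
move=> H; have := is_derive_sum H.
suff -> : (\sum_(i < n) F i) = (fun y => \sum_(i < n) F i y) by [].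
by apply/funext => y; rewrite fct_sumE.
Qed.

Lemma Dnear (f g : P -> R) df : (\near x, f x = g x) -> is_derive x v f df -> is_derive x v g df.
Proof. exact: near_eq_is_derive. Qed.
End Calc.

Section Alg0.
Variable R : realType.
Lemma sum2 (F : 'I_2 -> R) : \sum_(i < 2) F i = F ord0 + F ord_max.
Proof. by rewrite big_ord_recl big_ord1; congr (_ + F _); apply/val_inj. Qed.

Lemma ord2P (i : 'I_2) : i = ord0 \/ i = ord_max.
Proof. case: i => [[|[|n]] Hn]; [left|right|by []]; exact/val_inj. Qed.

Lemma inv22 (a b c d p q r s : R) : p*a + q*c = 1 -> p*b + q*d = 0 ->
  r*a + s*c = 0 -> r*b + s*d = 1 ->
  (a*d - b*c != 0) /\ p = d/(a*d - b*c) /\ q = -b/(a*d - b*c) /\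
  r = -c/(a*d - b*c) /\ s = a/(a*d - b*c).
Proof.
move=> e1 e2 e3 e4.
have hD : (p*s - q*r) * (a*d - b*c) = 1.
  have -> : (p*s - q*r) * (a*d - b*c) = (p*a+q*c)*(r*b+s*d) - (p*b+q*d)*(r*a+s*c) by ring.
  by rewrite e1 e2 e3 e4; ring.
have D0 : a*d - b*c != 0 by apply/eqP => D0; move: hD; rewrite D0 mulr0 => /eqP; rewrite eq_sym oner_eq0.
split=> //.
have hp : p * (a*d - b*c) = d.
  have -> : p * (a*d - b*c) = d*(p*a+q*c) - c*(p*b+q*d) by ring.
  by rewrite e1 e2; ring.
have hq : q * (a*d - b*c) = -b.
  have -> : q * (a*d - b*c) = a*(p*b+q*d) - b*(p*a+q*c) by ring.
  by rewrite e1 e2; ring.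
have hr : r * (a*d - b*c) = -c.
  have -> : r * (a*d - b*c) = d*(r*a+s*c) - c*(r*b+s*d) by ring.
  by rewrite e3 e4; ring.
have hs : s * (a*d - b*c) = a.
  have -> : s * (a*d - b*c) = a*(r*b+s*d) - b*(r*a+s*c) by ring.
  by rewrite e3 e4; ring.
split; first by rewrite -[p](mulfK D0) hp.
split; first by rewrite -[q](mulfK D0) hq.
split; first by rewrite -[r](mulfK D0) hr.
by rewrite -[s](mulfK D0) hs.
Qed.
End Alg0.

Section Geo.
Variable R : realType.
Notation P := 'rV[R]_2.
Variables (U : set P) (g : tensor2 R).
Hypothesis rg : riemannian_metric_on U g.

Definition detg (y : P) := g ord0 ord0 y * g ord_max ord_max y - g ord0 ord_max y * g ord_max ord0 y.

Lemma ginv_formula y : U y -> detg y != 0 /\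
  ginv g ord0 ord0 y = g ord_max ord_max y / detg y /\
  ginv g ord0 ord_max y = - g ord0 ord_max y / detg y /\
  ginv g ord_max ord0 y = - g ord_max ord0 y / detg y /\
  ginv g ord_max ord_max y = g ord0 ord0 y / detg y.
Proof.
move=> Uy; case: rg => _ [_ pdef].
have un : matx g y \in unitmx.
  rewrite unitmxE unitfE; apply/negP => /det0P [w w0 wM].
  by have := pdef y w Uy w0; rewrite wM mul0mx mxE ltxx.
have E := mulVmx un.
have e a b : \sum_(l < 2) ginv g a l y * g l b y = (a == b)%:R.
  have := congr1 (fun A : 'M[R]_2 => A a b) E; rewrite !mxE => <-.
  by apply: eq_bigr => l _; rewrite mxE.
have := e ord0 ord0; have := e ord0 ord_max; have := e ord_max ord0; have := e ord_max ord_max.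
rewrite !sum2 /= => e4 e3 e2 e1.
exact: (inv22 e1 e2 e3 e4).
Qed.
End Geo.

Section DerG.
Variable R : realType.
Notation P := 'rV[R]_2.
Variables (U : set P) (g : tensor2 R) (x : P) (k : 'I_2).
Hypotheses (oU : open U) (rg : riemannian_metric_on U g) (Ux : U x).

Lemma nearU : \forall y \near x, U y.
Proof. by apply: open_nbhs_nbhs; split. Qed.

Lemma Dsmooth (f : P -> R) : smooth_on U f -> is_derive x (ecoord R k) f (pd k f x).
Proof. by move=> sf; split => //; apply: diff_derivable; exact: (sf [::] x Ux). Qed.

Lemma Dg i j : is_derive x (ecoord R k) (g i j) (pd k (g i j) x).
Proof. by apply: Dsmooth; case: rg => H _; exact: H. Qed.

Definition adjg (i j : 'I_2) (y : P) : R :=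
  if i == ord0 then (if j == ord0 then g ord_max ord_max y else - g ord0 ord_max y)
  else (if j == ord0 then - g ord_max ord0 y else g ord0 ord0 y).

Definition dadjg (i j : 'I_2) : R :=
  if i == ord0 then (if j == ord0 then pd k (g ord_max ord_max) x else - pd k (g ord0 ord_max) x)
  else (if j == ord0 then - pd k (g ord_max ord0) x else pd k (g ord0 ord0) x).

Lemma ginvE i j y : U y -> ginv g i j y = adjg i j y * (detg g y)^-1.
Proof.
move=> Uy; have [_ [e00 [e01 [e10 e11]]]] := ginv_formula rg Uy.
by case: (ord2P i) => ->; case: (ord2P j) => ->; rewrite /adjg /=.
Qed.

Lemma detg0 : detg g x != 0.
Proof. by case: (ginv_formula rg Ux). Qed.

Definition ddetg : R :=
  (g ord0 ord0 x * pd k (g ord_max ord_max) x + g ord_max ord_max x * pd k (g ord0 ord0) x) -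
  (g ord0 ord_max x * pd k (g ord_max ord0) x + g ord_max ord0 x * pd k (g ord0 ord_max) x).

Lemma Ddetg : is_derive x (ecoord R k) (detg g) ddetg.
Proof. by apply: Dsub; apply: Dmul; apply: Dg. Qed.

Lemma Dadjg i j : is_derive x (ecoord R k) (adjg i j) (dadjg i j).
Proof.
rewrite /adjg /dadjg.
case: (ord2P i) => ->; case: (ord2P j) => -> /=.
- exact: Dg.
- apply: Dopp; exact: Dg.
- apply: Dopp; exact: Dg.
- exact: Dg.
Qed.

Lemma Dginv i j : is_derive x (ecoord R k) (ginv g i j)
  (adjg i j x * (- (detg g x) ^- 2 * ddetg) + (detg g x)^-1 * dadjg i j).
Proof.
apply: (@Dnear _ _ _ (fun y => adjg i j y * (detg g y)^-1)).
  by near=> y; rewrite ginvE //; near: y; exact: nearU.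
apply: Dmul; first exact: Dadjg.
apply: Dinv; [exact: detg0 | exact: Ddetg].
Unshelve. all: by end_near.
Qed.
End DerG.

Section Main.
Variable R : realType.
Notation P := 'rV[R]_2.
Variables (U : set P) (g h : tensor2 R) (x : P).
Hypotheses (oU : open U) (rg : riemannian_metric_on U g) (Ux : U x)
  (sh : forall i j, smooth_on U (h i j)) (hs : forall i j y, U y -> h i j y = h j i y).

Lemma gs i j y : U y -> g i j y = g j i y.
Proof. by case: rg => _ [H _]; exact: H. Qed.

Lemma pd_near (f1 f2 : P -> R) a : (forall y, U y -> f1 y = f2 y) -> pd a f1 x = pd a f2 x.
Proof.
move=> E; rewrite /pd; apply: near_eq_derive.
by near=> y; apply: E; near: y; exact: nearU.
Unshelve. all: by end_near.
Qed.

Lemma ne10 : (ord_max == ord0 :> 'I_2) = false. Proof. by []. Qed.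

Lemma ginv10 : ginv g ord_max ord0 x = ginv g ord0 ord_max x.
Proof.
have [_ [_ [e01 [e10 _]]]] := ginv_formula rg Ux.
by rewrite e01 e10 (gs ord_max ord0 Ux).
Qed.

Lemma nablaG k i j : pd k (g i j) x =
  \sum_(l < 2) christoffel g l k i x * g l j x + \sum_(l < 2) christoffel g l k j x * g i l x.
Proof.
have D0 := detg0 rg Ux.
have sg10 := gs ord_max ord0 Ux.
have dsg a : pd a (g ord_max ord0) x = pd a (g ord0 ord_max) x by apply: pd_near => y Uy; exact: gs.
have gE i' j' : ginv g i' j' x = adjg g i' j' x * (detg g x)^-1 by apply: (ginvE rg).
rewrite /detg in D0 gE; rewrite sg10 in D0.
rewrite /christoffel !sum2 !gE /adjg !eqxx !ne10 !sg10.
by case: (ord2P k) => ->; case: (ord2P i) => ->; case: (ord2P j) => ->; rewrite ?dsg ?sg10; field.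
Qed.

End Main.

Section Main2.
Variable R : realType.
Notation P := 'rV[R]_2.
Variables (U : set P) (g h : tensor2 R) (x : P).
Hypotheses (oU : open U) (rg : riemannian_metric_on U g) (Ux : U x)
  (sh : forall i j, smooth_on U (h i j)) (hs : forall i j y, U y -> h i j y = h j i y).

Lemma ne01 : (ord0 == ord_max :> 'I_2) = false. Proof. by []. Qed.

Definition Gam k l a := christoffel g l k a x.
Definition dGiv k i j := - (\sum_(a < 2) Gam k i a * ginv g a j x) - \sum_(a < 2) Gam k j a * ginv g i a x.
Definition dHv k := \sum_(i < 2) \sum_(j < 2) ginv g i j x * nabla2 g h k i j x.
Definition dSv k i j := nabla2 g h k i j x + \sum_(l < 2) Gam k l i * traceless g h l j x
  + \sum_(l < 2) Gam k l j * traceless g h i l x - dHv k / 2 * g i j x.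

Lemma DGi k i j : is_derive x (ecoord R k) (ginv g i j) (dGiv k i j).
Proof.
apply: (is_derive_eq (@Dginv _ _ _ _ k oU rg Ux i j)).
have D0 := detg0 rg Ux.
have sg10 := gs rg ord_max ord0 Ux.
have dsg a : pd a (g ord_max ord0) x = pd a (g ord0 ord_max) x by apply: (pd_near oU Ux) => y Uy; exact: (gs rg).
have gE i' j' : ginv g i' j' x = adjg g i' j' x * (detg g x)^-1 by apply: (ginvE rg).
rewrite /detg in D0 gE *; rewrite sg10 in D0.
rewrite /dGiv /Gam /christoffel !sum2 !gE /adjg /dadjg /ddetg.
by case: (ord2P k) => ->; case: (ord2P i) => ->; case: (ord2P j) => ->;
  rewrite ?eqxx ?ne10 ?ne01 ?dsg ?sg10; field.
Qed.
End Main2.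

Lemma helper0 (R : realType) (a b c s : R) : s = 0 -> a = b - c * s -> a = b.
Proof. by move=> -> ->; rewrite mulr0 subr0. Qed.

Section Main3.
Variable R : realType.
Notation P := 'rV[R]_2.
Variables (U : set P) (g h : tensor2 R) (x : P).
Hypotheses (oU : open U) (rg : riemannian_metric_on U g) (Ux : U x)
  (sh : forall i j, smooth_on U (h i j)) (hs : forall i j y, U y -> h i j y = h j i y).

Lemma DH k : is_derive x (ecoord R k) (meanH g h) (dHv g h x k).
Proof.
have Gs := ginv10 rg Ux.
have sh10 := hs ord_max ord0 Ux.
eapply is_derive_eq.
  rewrite /meanH; apply: Dsum => i; apply: Dsum => j; apply: Dmul.
    exact: (DGi oU rg Ux).
  exact: (@Dsmooth _ _ _ k Ux _ (sh i j)).
rewrite /dHv /nabla2 /dGiv /Gam !sum2 Gs sh10.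
ring.
Qed.

Lemma DS k i j : is_derive x (ecoord R k) (traceless g h i j) (dSv g h x k i j).
Proof.
eapply is_derive_eq.
  rewrite /traceless; apply: Dsub; first exact: (@Dsmooth _ _ _ k Ux _ (sh i j)).
  apply: Dmul; last exact: (@Dg _ _ _ _ k rg Ux).
  apply: (@Dmul _ _ _ (meanH g h) (fun _ => 2^-1)); first exact: DH.

cbv beta.
rewrite /dSv /nabla2 /traceless /Gam (nablaG oU rg Ux k i j) !sum2.
ring.
Qed.

Lemma traceless10 : traceless g h ord_max ord0 x = traceless g h ord0 ord_max x.
Proof. by rewrite /traceless (hs ord_max ord0 Ux) (gs rg ord_max ord0 Ux). Qed.

Lemma htr2 : \sum_(i < 2) \sum_(j < 2) \sum_(c < 2) \sum_(b < 2)
  ginv g i c x * ginv g j b x * traceless g h i j x * g c b x = 0.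
Proof.
have D0 := detg0 rg Ux.
have sg10 := gs rg ord_max ord0 Ux.
have sh10 := hs ord_max ord0 Ux.
have gE i' j' : ginv g i' j' x = adjg g i' j' x * (detg g x)^-1 by apply: (ginvE rg).
rewrite /detg in D0 gE; rewrite sg10 in D0.
rewrite /traceless /meanH !sum2 !gE /adjg ?eqxx ?ne10 ?ne01 ?sg10 ?sh10.
by field.
Qed.

Lemma DN k : pd k (norm2sq g (traceless g h)) x =
  2 * \sum_(i < 2) \sum_(j < 2) \sum_(c < 2) \sum_(b < 2)
    ginv g i c x * ginv g j b x * traceless g h i j x * nabla2 g h k c b x.
Proof.
evar (d : (R : Type)).
have Hd : is_derive x (ecoord R k) (norm2sq g (traceless g h)) d.
  rewrite /d /norm2sq; apply: Dsum => i; apply: Dsum => j; apply: Dsum => a; apply: Dsum => b.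
  apply: Dmul; last exact: DS.
  apply: Dmul; last exact: DS.
  apply: Dmul; exact: (DGi oU rg Ux).
have -> : pd k (norm2sq g (traceless g h)) x = d by case: Hd.
apply: (@helper0 _ _ _ (dHv g h x k / 2 * 2) _ htr2).
have Gs := ginv10 rg Ux.
have sg10 := gs rg ord_max ord0 Ux.
rewrite /d; cbv beta.
rewrite /dGiv /dSv /Gam !sum2 Gs traceless10 sg10.
ring.
Qed.

Lemma Tsym k i j : nabla2 g h k i j x = nabla2 g h k j i x.
Proof.
rewrite /nabla2 (pd_near oU Ux k (fun y Uy => hs i j Uy)) !sum2.
rewrite (hs j ord0 Ux) (hs j ord_max Ux) (hs ord0 i Ux) (hs ord_max i Ux).
ring.
Qed.
End Main3.
Section Alg.
Variable R : realType.
Lemma coreC (G Gi hh : 'I_2 -> 'I_2 -> R) (T : 'I_2 -> 'I_2 -> 'I_2 -> R) (dH dN : 'I_2 -> R) :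
  let D := G ord0 ord0 * G ord_max ord_max - G ord0 ord_max * G ord_max ord0 in
  D != 0 ->
  G ord_max ord0 = G ord0 ord_max ->
  hh ord_max ord0 = hh ord0 ord_max ->
  Gi ord0 ord0 = G ord_max ord_max / D ->
  Gi ord0 ord_max = - G ord0 ord_max / D ->
  Gi ord_max ord0 = - G ord_max ord0 / D ->
  Gi ord_max ord_max = G ord0 ord0 / D ->
  (forall i j k, T i j k = T j i k) -> (forall i j k, T i j k = T i k j) ->
  let H := \sum_(i < 2) \sum_(j < 2) Gi i j * hh i j in
  let ho := fun i j => hh i j - H / 2 * G i j in
  (forall a, dH a = \sum_(i < 2) \sum_(j < 2) Gi i j * T a i j) ->
  (forall a, dN a = 2 * \sum_(i < 2) \sum_(j < 2) \sum_(c < 2) \sum_(b < 2) Gi i c * Gi j b * ho i j * T a c b) ->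
  2 * (\sum_(i < 2) \sum_(j < 2) \sum_(a < 2) \sum_(b < 2) Gi i a * Gi j b * ho i j * ho a b)
   * ((\sum_(i < 2) \sum_(j < 2) \sum_(k < 2) \sum_(a < 2) \sum_(b < 2) \sum_(c < 2)
        Gi i a * Gi j b * Gi k c * T i j k * T a b c)
      - \sum_(i < 2) \sum_(j < 2) Gi i j * dH i * dH j)
  = \sum_(i < 2) \sum_(j < 2) Gi i j * dN i * dN j
    - 2 * \sum_(i < 2) \sum_(j < 2) \sum_(a < 2) \sum_(b < 2) ho i j * Gi i a * dN a * Gi j b * dH b.
Proof.
move=> D D0 Gs hs G00 G01 G10 G11 T1 T2 H ho EH EN.
rewrite !sum2 !EH !EN /ho /H !sum2.
have t1 : T ord0 ord0 ord_max = T ord_max ord0 ord0 by rewrite T2 T1.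
have t2 : T ord0 ord_max ord0 = T ord_max ord0 ord0 by rewrite T1.
have t3 : T ord_max ord_max ord0 = T ord0 ord_max ord_max by rewrite T1 T2.
have t4 : T ord_max ord0 ord_max = T ord0 ord_max ord_max by rewrite T1.
rewrite t1 t2 t3 t4 G00 G01 G10 G11 Gs hs.
rewrite /D Gs in D0 *.
field.
by [].
Qed.
End Alg.

Theorem lemma4p2 (R : realType) (U : set 'rV[R]_2) (g h : tensor2 R) :
  open U ->
  riemannian_metric_on U g ->
  (forall i j, smooth_on U (h i j)) ->
  (forall i j x, U x -> h i j x = h j i x) ->
  (forall i j k x, U x -> nabla2 g h i j k x = nabla2 g h j i k x) ->
  forall x, U x ->
    2 * norm2sq g (traceless g h) x
      * (norm3sq g (nabla2 g h) x - gradinner g (meanH g h) (meanH g h) x)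
    = gradinner g (norm2sq g (traceless g h)) (norm2sq g (traceless g h)) x
      - 2 * contract_grad g (traceless g h) (norm2sq g (traceless g h)) (meanH g h) x.
Proof.
move=> oU rg sh hs cod x Ux.
have D0 := detg0 rg Ux.
have [_ [e00 [e01 [e10 e11]]]] := ginv_formula rg Ux.
have EH a : pd a (meanH g h) x = \sum_(i < 2) \sum_(j < 2) ginv g i j x * nabla2 g h a i j x.
  by case: (DH oU rg Ux sh hs a).
have C := (@coreC R (fun i j => g i j x) (fun i j => ginv g i j x) (fun i j => h i j x)
  (fun a i j => nabla2 g h a i j x) (fun a => pd a (meanH g h) x)
  (fun a => pd a (norm2sq g (traceless g h)) x)
  D0 (gs rg ord_max ord0 Ux) (hs ord_max ord0 x Ux) e00 e01 e10 e11
  (fun i j k => cod i j k x Ux) (fun i j k => Tsym g oU Ux hs i j k)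
  EH (fun a => DN oU rg Ux sh hs a)).
rewrite /norm2sq /norm3sq /gradinner /contract_grad.
move: C; cbv zeta beta.
move=> C. exact C.
Qed.
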